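(* Let $\{\bm{y}_m\}_{m=1}^N\subseteq\mathbb{R}^p$ and let $\{\bm{x}'_j\}_{j=1}^n\subseteq\mathbb{R}^p$ be pairwise distinct with $\bm{x}'_i\ne\bm{y}_m$ for all $i,m$. Define, for $\bm{x}_1,\dots,\bm{x}_n\in\mathbb{R}^p$, $h^Q(\{\bm{x}_i\};\{\bm{x}'_j\}) = \frac{2}{nN}\sum_{i=1}^n\sum_{m=1}^N\left\{\frac{\|\bm{y}_m-\bm{x}_i\|_2^2}{2\|\bm{y}_m-\bm{x}'_i\|_2} + \frac{\|\bm{y}_m-\bm{x}'_i\|_2}{2}\right\} - \frac{1}{n^2}\sum_{i=1}^n\sum_{j\ne i}\left(\|\bm{x}'_i-\bm{x}'_j\|_2 + \frac{2(\bm{x}_i-\bm{x}'_i)^T(\bm{x}'_i-\bm{x}'_j)}{\|\bm{x}'_i-\bm{x}'_j\|_2}\right).$ Then $h^Q(\cdot;\{\bm{x}'_j\})$ majorizes $\hat E$ at $\{\bm{x}'_j\}_{j=1}^n$, i.e. $h^Q(\{\bm{x}_i\};\{\bm{x}'_j\})\ge\hat E(\{\bm{x}_i\};\{\bm{y}_m\})$ for all $(\bm{x}_1,\dots,\bm{x}_n)$, with equality at $\bm{x}_i=\bm{x}'_i$. Moreover, the global minimizer of $h^Q(\cdot;\{\bm{x}'_j\})$ is given by $\bm{x}_i = \left(\sum_{m=1}^N\|\bm{x}'_i-\bm{y}_m\|_2^{-1}\right)^{-1}\left(\frac{N}{n}\sum_{j\ne i}\frac{\bm{x}'_i-\bm{x}'_j}{\|\bm{x}'_i-\bm{x}'_j\|_2}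 + \sum_{m=1}^N\frac{\bm{y}_m}{\|\bm{x}'_i-\bm{y}_m\|_2}\right),\quad i=1,\dots,n.$
   Context: $\hat E(\{\bm{x}_i\};\{\bm{y}_m\}) = \frac{2}{nN}\sum_{i=1}^n\sum_{m=1}^N\|\bm{y}_m-\bm{x}_i\|_2 - \frac{1}{n^2}\sum_{i=1}^n\sum_{j=1}^n\|\bm{x}_i-\bm{x}_j\|_2$, viewed as a function of $(\bm{x}_1,\dots,\bm{x}_n)\in(\mathbb{R}^p)^n$. *)

(* Defs.v *)
From HB Require Import structures.
From mathcomp Require Import all_boot all_order all_algebra.
Set Implicit Arguments. Unset Strict Implicit. Unset Printing Implicit Defensive.
Import Order.TTheory GRing.Theory Num.Theory.
Local Open Scope ring_scope.

Section Defs.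
Variable R : rcfType.
Variable p : nat.

Definition dotp (u v : 'rV[R]_p) : R := \sum_(k < p) u 0 k * v 0 k.
Definition norm2 (u : 'rV[R]_p) : R := Num.sqrt (dotp u u).

Definition Ehat (n N : nat) (x : 'I_n -> 'rV[R]_p) (y : 'I_N -> 'rV[R]_p) : R :=
  2 / (n%:R * N%:R) * (\sum_(i < n) \sum_(m < N) norm2 (y m - x i))
  - 1 / (n%:R ^+ 2) * (\sum_(i < n) \sum_(j < n) norm2 (x i - x j)).

Definition hQ (n N : nat) (y : 'I_N -> 'rV[R]_p)
    (x : 'I_n -> 'rV[R]_p) (x' : 'I_n -> 'rV[R]_p) : R :=
  2 / (n%:R * N%:R) *
    (\sum_(i < n) \sum_(m < N)
       (norm2 (y m - x i) ^+ 2 / (2 * norm2 (y m - x' i))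
        + norm2 (y m - x' i) / 2))
  - 1 / (n%:R ^+ 2) *
    (\sum_(i < n) \sum_(j < n | j != i)
       (norm2 (x' i - x' j)
        + 2 * dotp (x i - x' i) (x' i - x' j) / norm2 (x' i - x' j))).

Definition hQ_argmin (n N : nat) (y : 'I_N -> 'rV[R]_p)
    (x' : 'I_n -> 'rV[R]_p) : 'I_n -> 'rV[R]_p :=
  fun i => (\sum_(m < N) (norm2 (x' i - y m))^-1)^-1 *:
    ((N%:R / n%:R) *: (\sum_(j < n | j != i) (norm2 (x' i - x' j))^-1 *: (x' i - x' j))
     + \sum_(m < N) (norm2 (x' i - y m))^-1 *: y m).

End Defs.

(* Main.v *)
Require Import Defs.
From HB Require Import structures.
From mathcomp Require Import all_boot all_order all_algebra.
From mathcomp Require Import ring lra.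
From Stdlib Require Import FunctionalExtensionality.
Import Order.TTheory GRing.Theory Num.Theory.
Local Open Scope ring_scope.
Set Implicit Arguments. Unset Strict Implicit.
Section H.
Variable R : rcfType.
Variable p : nat.
Implicit Types u v w : 'rV[R]_p.

Lemma dotpC u v : dotp u v = dotp v u.
Proof. by apply: eq_bigr => k _; rewrite mulrC. Qed.
Lemma dotpDl u v w : dotp (u + v) w = dotp u w + dotp v w.
Proof. by rewrite /dotp -big_split; apply: eq_bigr => k _; rewrite !mxE mulrDl. Qed.
Lemma dotpNl u w : dotp (- u) w = - dotp u w.
Proof. by rewrite /dotp -sumrN; apply: eq_bigr => k _; rewrite !mxE mulNr. Qed.
Lemma dotpBl u v w : dotp (u - v) w = dotp u w - dotp v w.
Proof. by rewrite dotpDl dotpNl. Qed.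
Lemma dotpZl a u w : dotp (a *: u) w = a * dotp u w.
Proof. by rewrite /dotp mulr_sumr; apply: eq_bigr => k _; rewrite !mxE mulrA. Qed.
Lemma dotp0l w : dotp 0 w = 0.
Proof. by rewrite /dotp big1 // => k _; rewrite mxE mul0r. Qed.
Lemma dotpDr u v w : dotp w (u + v) = dotp w u + dotp w v.
Proof. by rewrite dotpC dotpDl !(dotpC w). Qed.
Lemma dotpBr u v w : dotp w (u - v) = dotp w u - dotp w v.
Proof. by rewrite dotpC dotpBl !(dotpC w). Qed.
Lemma dotpZr a u w : dotp w (a *: u) = a * dotp w u.
Proof. by rewrite dotpC dotpZl dotpC. Qed.
Lemma dotp0r w : dotp w 0 = 0.
Proof. by rewrite dotpC dotp0l. Qed.
Lemma dotp_sumr (I : Type) (r : seq I) (P : pred I) (F : I -> 'rV[R]_p) w :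
  dotp w (\sum_(i <- r | P i) F i) = \sum_(i <- r | P i) dotp w (F i).
Proof.
apply: (big_morph (dotp w)) => [u v|]; [exact: dotpDr | exact: dotp0r].
Qed.
Lemma dotp_ge0 u : 0 <= dotp u u.
Proof. by apply: sumr_ge0 => k _; rewrite -expr2 sqr_ge0. Qed.
Lemma dotp_eq0 u : dotp u u = 0 -> u = 0.
Proof.
move=> /eqP; rewrite psumr_eq0 => [/allP H|k _]; last by rewrite -expr2 sqr_ge0.
apply/rowP => k; rewrite mxE; have := H k (mem_index_enum k).
by rewrite /= -expr2 sqrf_eq0 => /eqP.
Qed.
Lemma norm2_sqr u : norm2 u ^+ 2 = dotp u u.
Proof. by rewrite /norm2 sqr_sqrtr // dotp_ge0. Qed.
Lemma norm2_ge0 u : 0 <= norm2 u.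
Proof. exact: sqrtr_ge0. Qed.
Lemma norm2_eq0 u : norm2 u = 0 -> u = 0.
Proof. by move=> H; apply: dotp_eq0; rewrite -norm2_sqr H expr0n. Qed.
Lemma norm2_gt0 u : u != 0 -> 0 < norm2 u.
Proof. by move=> H; rewrite lt0r norm2_ge0 andbT; apply: contra H => /eqP/norm2_eq0 ->. Qed.
Lemma norm2N u : norm2 (- u) = norm2 u.
Proof. by rewrite /norm2 dotpNl dotpC dotpNl opprK. Qed.
Lemma norm2B u v : norm2 (u - v) = norm2 (v - u).
Proof. by rewrite -norm2N opprB. Qed.
Lemma norm2_0 : norm2 (0 : 'rV[R]_p) = 0.
Proof. by rewrite /norm2 dotp0l sqrtr0. Qed.
Lemma dotp_self_div u : dotp u u / norm2 u = norm2 u.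
Proof.
rewrite -norm2_sqr; have [->|H] := eqVneq (norm2 u) 0; first by rewrite invr0 mulr0.
by rewrite expr2 -mulrA divff // mulr1.
Qed.
Lemma CS u v : dotp u v <= norm2 u * norm2 v.
Proof.
have [Hu|Hu] := eqVneq u 0; first by rewrite Hu dotp0l norm2_0 mul0r.
have [Hv|Hv] := eqVneq v 0; first by rewrite Hv dotp0r norm2_0 mulr0.
have a0 := norm2_gt0 Hu; have b0 := norm2_gt0 Hv.
have := dotp_ge0 (norm2 v *: u - norm2 u *: v).
rewrite !(dotpBl, dotpBr, dotpZl, dotpZr) -!norm2_sqr (dotpC v u) => H.
have : 0 <= 2 * (norm2 u * norm2 v) * (norm2 u * norm2 v - dotp u v) by
  rewrite -(subr_ge0) in H; move: H; set a := norm2 u; set b := norm2 v; set c := dotp u v;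
  congr (_ <= _); ring.
by rewrite pmulr_rge0 ?subr_ge0 // mulr_gt0 // mulr_gt0.
Qed.
Lemma CS_div u v : dotp u v / norm2 v <= norm2 u.
Proof.
have [->|Hv] := eqVneq v 0; first by rewrite norm2_0 invr0 mulr0 norm2_ge0.
rewrite ler_pdivrMr ?norm2_gt0 //; exact: CS.
Qed.
End H.
Lemma sum_neq (V : nmodType) n (i : 'I_n) (F : 'I_n -> V) :
  F i = 0 -> \sum_(j < n | j != i) F j = \sum_j F j.
Proof. by move=> H; rewrite [RHS](bigD1 i) //= H add0r. Qed.

Lemma amgm (R : rcfType) (s b : R) : 0 < b -> s <= s ^+ 2 / (2 * b) + b / 2.
Proof.
move=> b0; rewrite -subr_ge0.
have -> : s ^+ 2 / (2 * b) + b / 2 - s = (s - b) ^+ 2 / (2 * b).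
  by field; rewrite ?pnatr_eq0 ?gt_eqF.
by rewrite divr_ge0 ?sqr_ge0 // mulr_ge0 // ltW.
Qed.

Section M.
Variable R : rcfType.
Variables p n N : nat.
Variable y : 'I_N -> 'rV[R]_p.
Variable x' : 'I_n -> 'rV[R]_p.

Definition Ti (i : 'I_n) (v : 'rV[R]_p) : R :=
  2 / (n%:R * N%:R) *
    (\sum_(m < N) (norm2 (y m - v) ^+ 2 / (2 * norm2 (y m - x' i))
        + norm2 (y m - x' i) / 2))
  - 1 / (n%:R ^+ 2) *
    (\sum_(j < n) (norm2 (x' i - x' j)
        + 2 * dotp (v - x' i) (x' i - x' j) / norm2 (x' i - x' j))).

Lemma hQ_Ti x : hQ y x x' = \sum_i Ti i (x i).
Proof.
rewrite /hQ /Ti mulr_sumr mulr_sumr -sumrB; apply: eq_bigr => i _.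
by rewrite sum_neq // subrr norm2_0 dotp0r mulr0 mul0r addr0.
Qed.


Lemma dotpNr (u w : 'rV[R]_p) : dotp w (- u) = - dotp w u.
Proof. by rewrite dotpC dotpNl dotpC. Qed.

Lemma Q2_eq (x : 'I_n -> 'rV[R]_p) :
  \sum_i \sum_j (norm2 (x' i - x' j)
        + 2 * dotp (x i - x' i) (x' i - x' j) / norm2 (x' i - x' j))
  = \sum_i \sum_j dotp (x i - x j) (x' i - x' j) / norm2 (x' i - x' j).
Proof.
set F := fun i j => dotp (x i - x' i) (x' i - x' j) / norm2 (x' i - x' j).
set T := fun i j => dotp (x i - x j) (x' i - x' j) / norm2 (x' i - x' j).
transitivity (\sum_i \sum_j (T i j + F i j - F j i)).
  apply: eq_bigr => i _; apply: eq_bigr => j _; rewrite /T /F.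
  rewrite /= (norm2B (x' j) (x' i)) -(opprB (x' i) (x' j)) dotpNr.
  have -> : x i - x j = (x i - x' i) - (x j - x' j) + (x' i - x' j).
    by apply/rowP => k; rewrite !mxE; ring.
  set d := x' i - x' j; set e1 := x i - x' i; set e2 := x j - x' j.
  rewrite dotpDl dotpBl !mulrDl dotp_self_div; ring.
under eq_bigr do rewrite sumrB big_split /=.
rewrite sumrB big_split /= [X in _ - X]exchange_big /=.
by rewrite addrK.
Qed.

Lemma part1 (x : 'I_n -> 'rV[R]_p) (hxy : forall i m, x' i != y m) :
  Ehat x y <= hQ y x x'.
Proof.
rewrite /Ehat /hQ.
under [X in _ <= _ - _ * X]eq_bigr => i _ do
  rewrite sum_neq ?subrr ?norm2_0 ?dotp0r ?invr0 ?mulr0 ?addr0 //.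
rewrite Q2_eq; apply: lerB.
  apply: ler_wpM2l; first by rewrite divr_ge0 // mulr_ge0.
  apply: ler_sum => i _; apply: ler_sum => m _; apply: amgm.
  by apply: norm2_gt0; rewrite subr_eq0 eq_sym.
apply: ler_wpM2l; first by rewrite divr_ge0 // exprn_ge0.
apply: ler_sum => i _; apply: ler_sum => j _; exact: CS_div.
Qed.

Lemma part2 (hxy : forall i m, x' i != y m) : hQ y x' x' = Ehat x' y.
Proof.
rewrite /Ehat /hQ.
under [X in _ - _ * X = _]eq_bigr => i _ do
  rewrite sum_neq ?subrr ?norm2_0 ?dotp0r ?invr0 ?mulr0 ?addr0 //.
congr (_ * _ - _ * _); apply: eq_bigr => i _; apply: eq_bigr => m _.
  have b0 : norm2 (y m - x' i) != 0.
    by rewrite gt_eqF // norm2_gt0 // subr_eq0 eq_sym.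
  by field.
by rewrite dotp0l mulr0 mul0r addr0.
Qed.


Lemma Ti_quad (hn : (0 < n)%N) (hN : (0 < N)%N)
  (hxy : forall i m, x' i != y m) i v :
  Ti i v = Ti i (hQ_argmin y x' i)
    + (\sum_(m < N) (norm2 (x' i - y m))^-1) / (n%:R * N%:R)
      * dotp (v - hQ_argmin y x' i) (v - hQ_argmin y x' i).
Proof.
set z := hQ_argmin y x' i; set a := \sum_(m < N) _.
have bpos m : 0 < norm2 (y m - x' i).
  by apply: norm2_gt0; rewrite subr_eq0 eq_sym.
have a0 : 0 < a.
  rewrite /a (bigD1 (Ordinal hN)) //= ltr_wpDr ?sumr_ge0 // => [m _|].
    by rewrite invr_ge0 norm2_ge0.
  by rewrite invr_gt0 norm2B.
set w := v - z.
have Hv : v = z + w by rewrite /w addrC subrK.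
set g := \sum_(j < n) (norm2 (x' i - x' j))^-1 *: (x' i - x' j).
set ys := \sum_(m < N) (norm2 (x' i - y m))^-1 *: y m.
have Hz : a *: z = (N%:R / n%:R) *: g + ys.
  rewrite /z /hQ_argmin scalerA divff ?gt_eqF // scale1r sum_neq //.
  by rewrite subrr scaler0.
clearbody w z.
set X := \sum_(m < N) dotp w (y m - z) / norm2 (y m - x' i).
set Y := \sum_(j < n) dotp w (x' i - x' j) / norm2 (x' i - x' j).
have HX : X = dotp w ys - a * dotp w z.
  rewrite /X /ys dotp_sumr /a mulr_suml -sumrB; apply: eq_bigr => m _.
  by rewrite dotpZr dotpBr norm2B; ring.
have HY : Y = dotp w g.
  by rewrite /Y /g dotp_sumr; apply: eq_bigr => j _; rewrite dotpZr mulrC.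
have HXY : X = - (N%:R / n%:R) * Y.
  by rewrite HX HY -dotpZr Hz dotpDr dotpZr; ring.
have S1 : \sum_(m < N) (norm2 (y m - v) ^+ 2 / (2 * norm2 (y m - x' i))
        + norm2 (y m - x' i) / 2)
  = \sum_(m < N) (norm2 (y m - z) ^+ 2 / (2 * norm2 (y m - x' i))
        + norm2 (y m - x' i) / 2) + dotp w w * (a / 2) - X.
  rewrite /X /a [(\sum_(m < N) _) / 2]mulr_suml [dotp w w * _]mulr_sumr -big_split -sumrB /=; apply: eq_bigr => m _.
  have -> : y m - v = (y m - z) - w by rewrite Hv; apply/rowP => k; rewrite !mxE; ring.
  rewrite !norm2_sqr dotpBl !dotpBr (dotpC (y m - z) w) (norm2B (x' i)).
  by rewrite dotpBr; field; rewrite gt_eqF ?bpos.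
have S2 : \sum_(j < n) (norm2 (x' i - x' j)
        + 2 * dotp (v - x' i) (x' i - x' j) / norm2 (x' i - x' j))
  = \sum_(j < n) (norm2 (x' i - x' j)
        + 2 * dotp (z - x' i) (x' i - x' j) / norm2 (x' i - x' j)) + 2 * Y.
  rewrite /Y mulr_sumr -big_split /=; apply: eq_bigr => j _.
  have -> : v - x' i = (z - x' i) + w by rewrite Hv; apply/rowP => k; rewrite !mxE; ring.
  by rewrite dotpDl; ring.
rewrite /Ti S1 S2 HXY.
have n0 : n%:R != 0 :> R by rewrite pnatr_eq0 -lt0n.
have N0 : N%:R != 0 :> R by rewrite pnatr_eq0 -lt0n.
by field; rewrite n0 N0.
Qed.

End M.
Unset Implicit Arguments. Set Strict Implicit.
Lemma coef_pos (R : rcfType) (p n N : nat) (hn : (0 < n)%N) (hN : (0 < N)%N)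
    (y : 'I_N -> 'rV[R]_p) (x' : 'I_n -> 'rV[R]_p)
    (hxy : forall i m, x' i != y m) i :
  0 < (\sum_(m < N) (norm2 (x' i - y m))^-1) / (n%:R * N%:R).
Proof.
apply: divr_gt0; last by rewrite mulr_gt0 // ltr0n.
rewrite (bigD1 (Ordinal hN)) //= ltr_wpDr ?sumr_ge0 // => [m _|].
  by rewrite invr_ge0 norm2_ge0.
by rewrite invr_gt0 norm2_gt0 // subr_eq0.
Qed.

Theorem lemma6 (R : rcfType) (p n N : nat) (hn : (0 < n)%N) (hN : (0 < N)%N)
    (y : 'I_N -> 'rV[R]_p) (x' : 'I_n -> 'rV[R]_p)
    (hdist : injective x') (hxy : forall i m, x' i != y m) :
  (forall x : 'I_n -> 'rV[R]_p, Ehat x y <= hQ y x x')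
  /\ hQ y x' x' = Ehat x' y
  /\ (forall x : 'I_n -> 'rV[R]_p, hQ y (hQ_argmin y x') x' <= hQ y x x')
  /\ (forall x : 'I_n -> 'rV[R]_p, hQ y x x' = hQ y (hQ_argmin y x') x' -> x = hQ_argmin y x').
Proof.
split; first by move=> x; exact: part1.
split; first exact: part2.
split.
  move=> x; rewrite !hQ_Ti; apply: ler_sum => i _.
  rewrite (Ti_quad hn hN hxy i (x i)) lerDl.
  by rewrite mulr_ge0 ?dotp_ge0 // ltW // coef_pos.
move=> x; rewrite !hQ_Ti.
under eq_bigr => i _ do rewrite (Ti_quad hn hN hxy i (x i)).
rewrite big_split /= => /eqP; rewrite -subr_eq0 addrAC subrr add0r => /eqP H.
have H2 := psumr_eq0P _ H.
have {}H2 := H2 (fun j _ => mulr_ge0 (ltW (@coef_pos _ _ _ _ hn hN _ _ hxy j)) (dotp_ge0 _)).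
apply: functional_extensionality => i.
move: (H2 i isT) => /eqP; rewrite mulf_eq0 gt_eqF ?coef_pos //= => /eqP /dotp_eq0 /eqP.
by rewrite subr_eq0 => /eqP.
Qed.
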